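(* Let $N\ge 2$, $a\in\mathbb{R}^N$ with all $a_i\neq 0$, $\underline x<\overline x$, $\underline y<\overline y$ in $\mathbb{R}^N$, and $\mathcal{S}_a=\{(x,y)\in\mathbb{R}^N\times\mathbb{R}^N: \sum_{i=1}^N a_ix_iy_i=0,\ \underline x\le x\le\overline x,\ \underline y\le y\le\overline y\}$. Let $(x,y)$ be an extreme point of $\mathcal{S}_a$ and let $i\neq j$. Then either both $x_i\in\{\underline x_i,\overline x_i\}$ and $y_i\in\{\underline y_i,\overline y_i\}$, or both $x_j\in\{\underline x_j,\overline x_j\}$ and $y_j\in\{\underline y_j,\overline y_j\}$. *)

(* Defs.v *)
(* R^N is rendered as 'rV[R]_N for an arbitrary real field R
   (the statement is purely order-algebraic, so this generalizes R = reals). *)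
From HB Require Import structures.
From mathcomp Require Import all_boot all_order all_algebra.
Set Implicit Arguments. Unset Strict Implicit. Unset Printing Implicit Defensive.
Import Order.TTheory GRing.Theory Num.Theory.
Local Open Scope ring_scope.

Definition extreme_point (R : realFieldType) (N : nat)
    (S : 'rV[R]_N * 'rV[R]_N -> Prop) (p : 'rV[R]_N * 'rV[R]_N) : Prop :=
  S p /\
  forall (q r : 'rV[R]_N * 'rV[R]_N) (t : R),
    S q -> S r -> 0 < t < 1 ->
    p.1 = t *: q.1 + (1 - t) *: r.1 ->
    p.2 = t *: q.2 + (1 - t) *: r.2 ->
    q = r.

Definition S_a (R : realFieldType) (N : nat) (a xl xu yl yu : 'rV[R]_N)
    (p : 'rV[R]_N * 'rV[R]_N) : Prop :=
  \sum_(i < N) a 0 i * p.1 0 i * p.2 0 i = 0 /\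
  (forall i : 'I_N, xl 0 i <= p.1 0 i <= xu 0 i) /\
  (forall i : 'I_N, yl 0 i <= p.2 0 i <= yu 0 i).

(* Main.v *)
Require Import Defs.
From HB Require Import structures.
From mathcomp Require Import all_boot all_order all_algebra.
From mathcomp Require Import ring lra.
Import Order.TTheory GRing.Theory Num.Theory.
Local Open Scope ring_scope.

Lemma int_of (R : realFieldType) (lo u hi : R) :
  lo <= u <= hi -> u != lo -> u != hi -> lo < u < hi.
Proof.
move=> /andP[h1 h2] n1 n2; rewrite !lt_neqAle h1 h2 n2 andbT /=.
by rewrite eq_sym n1.
Qed.

Lemma interval_eps (R : realFieldType) (lo u hi c : R) :
  lo < u < hi -> exists2 eps, 0 < eps & forall e, `|e| <= eps -> lo <= u + e * c <= hi.
Proof.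
move=> /andP[h1 h2].
set m := Num.min (u - lo) (hi - u).
have m0 : 0 < m by rewrite lt_min !subr_gt0 h1 h2.
have mlo : m <= u - lo by rewrite ge_min lexx.
have mhi : m <= hi - u by rewrite ge_min lexx orbT.
have c1 : 0 < `|c| + 1 by rewrite ltr_wpDl.
exists (m / (`|c| + 1)); first by rewrite divr_gt0.
move=> e he.
have hec : `|e * c| <= m.
  rewrite normrM.
  have -> : m = m / (`|c| + 1) * (`|c| + 1) by rewrite mulfVK // gt_eqF.
  apply: (le_trans (ler_wpM2r (normr_ge0 _) he)).
  rewrite ler_wpM2l ?lerDl //.
  by rewrite divr_ge0 // ltW.
move: hec; rewrite ler_norml => /andP[k1 k2].
apply/andP; split; lra.
Qed.

Lemma step (R : realFieldType) (b : bool) (xl x xu yl y yu c : R) :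
  xl <= x <= xu -> yl <= y <= yu ->
  (if b then xl < x < xu else yl < y < yu) ->
  exists2 eps, 0 < eps & forall e, `|e| <= eps ->
    (xl <= x + e * (if b then c else 0) <= xu) /\
    (yl <= y + e * (if b then 0 else c) <= yu).
Proof.
move=> hxb hyb; case: b => h.
  have [eps e0 H] := @interval_eps _ _ _ _ c h.
  by exists eps => // e he; rewrite mulr0 addr0; split => //; apply: H.
have [eps e0 H] := @interval_eps _ _ _ _ c h.
by exists eps => // e he; rewrite mulr0 addr0; split => //; apply: H.
Qed.

Lemma choose_b (R : realFieldType) (xl x xu yl y yu : R) :
  xl <= x <= xu -> yl <= y <= yu ->
  ~~ ([|| x == xl | x == xu] && [|| y == yl | y == yu]) ->
  exists b : bool, if b then xl < x < xu else yl < y < yu.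
Proof.
move=> hx hy; rewrite negb_and !negb_or => /orP[/andP[n1 n2]|/andP[n1 n2]].
  by exists true; apply: int_of.
by exists false; apply: int_of.
Qed.

Theorem corollary1 (R : realFieldType) (N : nat) (hN : (2 <= N)%N)
    (a xl xu yl yu : 'rV[R]_N)
    (ha : forall i : 'I_N, a 0 i != 0)
    (hx : forall i : 'I_N, xl 0 i < xu 0 i)
    (hy : forall i : 'I_N, yl 0 i < yu 0 i)
    (x y : 'rV[R]_N)
    (hext : extreme_point (S_a a xl xu yl yu) (x, y))
    (i j : 'I_N) (hij : i != j) :
  ((x 0 i = xl 0 i \/ x 0 i = xu 0 i) /\ (y 0 i = yl 0 i \/ y 0 i = yu 0 i)) \/
  ((x 0 j = xl 0 j \/ x 0 j = xu 0 j) /\ (y 0 j = yl 0 j \/ y 0 j = yu 0 j)).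
Proof.
case: hext => [[hsum [hxb hyb]] hext]; rewrite /= in hsum hxb hyb.
have [Ci|Ci] := boolP ([|| x 0 i == xl 0 i | x 0 i == xu 0 i] &&
                        [|| y 0 i == yl 0 i | y 0 i == yu 0 i]).
  left; move: Ci => /andP[/orP[]/eqP h1 /orP[]/eqP h2]; tauto.
have [Cj|Cj] := boolP ([|| x 0 j == xl 0 j | x 0 j == xu 0 j] &&
                        [|| y 0 j == yl 0 j | y 0 j == yu 0 j]).
  right; move: Cj => /andP[/orP[]/eqP h1 /orP[]/eqP h2]; tauto.
exfalso.
have [bi Hi] := @choose_b _ _ _ _ _ _ _ (hxb i) (hyb i) Ci.
have [bj Hj] := @choose_b _ _ _ _ _ _ _ (hxb j) (hyb j) Cj.
pose ci := a 0 i * (if bi then y 0 i else x 0 i).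
pose cj := a 0 j * (if bj then y 0 j else x 0 j).
pose z := (cj == 0) && (ci == 0).
pose s : R := if z then 1 else cj.
pose t : R := if z then 0 else - ci.
have st0 : (s != 0) || (t != 0).
  rewrite /s /t; case: ifP => hz; first by rewrite oner_neq0.
  by move: hz; rewrite /z => /negbT; rewrite negb_and oppr_eq0.
have lin : ci * s + cj * t = 0.
  rewrite /s /t; case: ifP => [/andP[_ /eqP ->]|_]; ring.
pose D (b : bool) (l : 'I_N) : R :=
  if l == i then (if b == bi then s else 0)
  else if l == j then (if b == bj then t else 0) else 0.
pose dx := \row_l D true l.
pose dy := \row_l D false l.
have [ei ei0 Hei] := @step _ _ _ _ _ _ _ _ s (hxb i) (hyb i) Hi.
have [ej ej0 Hej] := @step _ _ _ _ _ _ _ _ t (hxb j) (hyb j) Hj.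
pose eps := Num.min ei ej.
have eps0 : 0 < eps by rewrite lt_min ei0 ej0.
have key : forall e, `|e| <= eps -> S_a a xl xu yl yu (x + e *: dx, y + e *: dy).
  move=> e he.
  have hei : `|e| <= ei by apply: (le_trans he); rewrite ge_min lexx.
  have hej : `|e| <= ej by apply: (le_trans he); rewrite ge_min lexx orbT.
  have Dji : (j == i) = false by apply/negbTE; rewrite eq_sym.
  split; [|split] => /=.
  - have -> : \sum_(l < N) a 0 l * (x + e *: dx) 0 l * (y + e *: dy) 0 l =
       \sum_(l < N) a 0 l * x 0 l * y 0 l
       + e * \sum_(l < N) (a 0 l * (D true l * y 0 l + x 0 l * D false l))
       + e ^+ 2 * \sum_(l < N) (a 0 l * (D true l * D false l)).
      rewrite !mulr_sumr -!big_split /=; apply: eq_bigr => l _.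
      rewrite !mxE; ring.
    have -> : \sum_(l < N) (a 0 l * (D true l * D false l)) = 0.
      apply: big1 => l _; rewrite /D; case: (l == i) => /=.
        by case: (bi) => /=; rewrite ?mul0r ?mulr0.
      case: (l == j) => /=; last by rewrite !mulr0.
      by case: (bj) => /=; rewrite ?mul0r ?mulr0.
    rewrite hsum (bigD1 i) //= (bigD1 j) /=; last by rewrite eq_sym.
    rewrite big1; last first.
      by move=> l /andP[nli nlj]; rewrite /D (negbTE nli) (negbTE nlj) mul0r mulr0 addr0 mulr0.
    rewrite /D eqxx Dji eqxx.
    move: lin; rewrite /ci /cj; case: (bi); case: (bj) => /= lin;
      rewrite ?(addr0, add0r, mulr0, mul0r); move/(congr1 (fun w => e * w)): lin; rewrite mulr0 => <-; ring.
  - move=> l; rewrite !mxE /D.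
    have [->|nli] := eqVneq l i.
      by case: (Hei e hei); case: (bi) => /=.
    have [->|nlj] := eqVneq l j.
      by case: (Hej e hej); case: (bj) => /=.
    by rewrite mulr0 addr0 hxb.
  - move=> l; rewrite !mxE /D.
    have [->|nli] := eqVneq l i.
      by case: (Hei e hei); case: (bi) => /=.
    have [->|nlj] := eqVneq l j.
      by case: (Hej e hej); case: (bj) => /=.
    by rewrite mulr0 addr0 hyb.
have Sq := key eps; have Sr := key (- eps).
have e1 : `|eps| <= eps by rewrite ger0_norm // ltW.
have e2 : `|- eps| <= eps by rewrite normrN ger0_norm // ltW.
have h12 : (0:R) < (2:R)^-1 < 1.
  by apply/andP; split; lra.
have half : 1 - 2^-1 = 2^-1 :> R by lra.
have E := hext _ _ 2^-1 (Sq e1) (Sr e2) h12.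
have Ex : x = 2^-1 *: (x + eps *: dx) + (1 - 2^-1) *: (x + - eps *: dx).
  apply/rowP => l; rewrite !mxE half.
  have -> : (2^-1 * (x 0 l + eps * D true l) + 2^-1 * (x 0 l + - eps * D true l))
     = 2^-1 * 2 * x 0 l by ring.
  by rewrite mulVf ?pnatr_eq0 // mul1r.
have Ey : y = 2^-1 *: (y + eps *: dy) + (1 - 2^-1) *: (y + - eps *: dy).
  apply/rowP => l; rewrite !mxE half.
  have -> : (2^-1 * (y 0 l + eps * D false l) + 2^-1 * (y 0 l + - eps * D false l))
     = 2^-1 * 2 * y 0 l by ring.
  by rewrite mulVf ?pnatr_eq0 // mul1r.
move: (E Ex Ey) => [] /rowP Hx /rowP Hy.
have cancel : forall (u d : R), u + eps * d = u + - eps * d -> d = 0.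
  move=> u d h.
  rewrite mulNr in h.
  have /eqP : eps * d = 0 by lra.
  by rewrite mulf_eq0 (gt_eqF eps0) => /eqP.
have Dji : (j == i) = false by apply/negbTE; rewrite eq_sym.
move: st0 => /orP[] /eqP; apply.
  have := Hx i; have := Hy i; rewrite !mxE => h2 h1.
  move: (cancel _ _ h1) (cancel _ _ h2); rewrite /D eqxx.
  by case: (bi) => /= // ->.
have := Hx j; have := Hy j; rewrite !mxE => h2 h1.
move: (cancel _ _ h1) (cancel _ _ h2); rewrite /D eqxx Dji.
by case: (bj) => /= // ->.
Qed.
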